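(* $\mathbf{Ex}\equiv^{\mathrm{fin}}_{\mathrm{Learn}}\mathbf{PL}$ and $\mathbf{Ex}<_{\mathrm{Learn}}\mathbf{PL}$: a finite family of structures is $\mathbf{Ex}$-learnable iff it is $\mathbf{PL}$-learnable; every $\mathbf{Ex}$-learnable family is $\mathbf{PL}$-learnable, and some $\mathbf{PL}$-learnable family is not $\mathbf{Ex}$-learnable.
   Context: All structures are countable, have domain $\mathbb{N}$, are in a finite relational signature, and are identified with their atomic diagrams. A family of structures $\mathfrak{K}$ is a countable set of pairwise nonisomorphic such structures; $\mathcal{S}\restriction_s$ is the finite substructure on $\{0,\dots,s\}$; $\mathrm{LD}(\mathfrak{K})$ is the set of structures with domain $\mathbb{N}$ isomorphic to a member of $\mathfrak{K}$. A learner is an arbitrary function from $\{\mathcal{S}\restriction_s:\mathcal{S}\in\mathrm{LD}(\mathfrak{K})\}$ to $\{\ulcorner\mathcal{A}\urcorner:\mathcal{A}\in\mathfrak{K}\}\cup\{?\}$ (distinct formal symbols). $\mathfrak{K}$ is $\mathbf{Ex}$-learnable if some learner $\mathbf{M}$ satisfies: for every $\mathcal{S}\in\mathrm{LD}(\mathfrak{K})$, $\mathbf{M}(\mathcal{S}\restriction_n)$ is eventually constantly $\ulcorner\mathcal{A}\urcorner$ where $\mathcal{A}\in\mathfrak{K}$, $\mathcal{A}\cong\mathcal{S}$. $\mathfrak{K}$ is $\mathbf{PL}$-learnable if some learner $\mathbf{M}$ satisfies: for every $\mathcal{S}\in\mathrm{LD}(\mathfrak{K})$ and $\mathcal{A}\in\mathfrak{K}$,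 $\{n:\mathbf{M}(\mathcal{S}\restriction_n)=\ulcorner\mathcal{A}\urcorner\}$ is infinite iff $\mathcal{A}\cong\mathcal{S}$. For criteria $X,Y$: $X\leq_{\mathrm{Learn}}Y$ iff every $X$-learnable family is $Y$-learnable; $\leq^{\mathrm{fin}}_{\mathrm{Learn}}$ is the same restricted to finite families; $<$ means $\leq$ but not $\geq$; $\equiv$ means both. *)

(* Defs.v *)
From mathcomp Require Import all_boot.
Set Implicit Arguments. Unset Strict Implicit. Unset Printing Implicit Defensive.

(* A finite relational signature: the list of arities of its relation symbols. *)
Definition signature := seq nat.

(* A structure with domain nat, identified with its atomic diagram:
   for each relation symbol i, the characteristic function of R_i on tuples. *)
Definition structure (sig : signature) :=
  forall i : 'I_(size sig), (nth 0 sig i).-tuple nat -> bool.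

Definition fstructure (sig : signature) (s : nat) :=
  forall i : 'I_(size sig), (nth 0 sig i).-tuple 'I_s.+1 -> bool.

Definition restr (sig : signature) (S : structure sig) (s : nat) : fstructure sig s :=
  fun i t => S i (map_tuple (@nat_of_ord s.+1) t).

(* The input of a learner at stage s: the finite structure S|_s. *)
Definition stage (sig : signature) (S : structure sig) (s : nat)
  : {n : nat & fstructure sig n} := existT _ s (@restr sig S s).

Definition iso (sig : signature) (S1 S2 : structure sig) : Prop :=
  exists f : nat -> nat, bijective f /\
    forall (i : 'I_(size sig)) (t : (nth 0 sig i).-tuple nat),
      S1 i t = S2 i (map_tuple f t).

(* A family: a countable indexed set of pairwise nonisomorphic structures.
   The index i serves as the code of K i. *)
Definition family (sig : signature) (I : countType) (K : I -> structure sig) : Prop :=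
  forall i j, iso (K i) (K j) -> i = j.

Definition LD (sig : signature) (I : countType) (K : I -> structure sig)
  (S : structure sig) : Prop := exists i, iso (K i) S.

(* Learners: arbitrary functions from finite structures to codes or ? (None). *)
Definition learner (sig : signature) (I : countType) :=
  {n : nat & fstructure sig n} -> option I.

Definition Ex_learnable (sig : signature) (I : countType) (K : I -> structure sig) : Prop :=
  exists M : learner sig I, forall S, LD K S ->
    exists i, iso (K i) S /\ exists n0, forall n, n0 <= n -> M (stage S n) = Some i.

Definition PL_learnable (sig : signature) (I : countType) (K : I -> structure sig) : Prop :=
  exists M : learner sig I, forall S, LD K S -> forall i,
    (forall m, exists n, m <= n /\ M (stage S n) = Some i) <-> iso (K i) S.

Definition criterion := forall (sig : signature) (I : countType), (I -> structure sig) -> Prop.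

Definition learn_le (X Y : criterion) : Prop :=
  forall sig (I : countType) (K : I -> structure sig), family K -> X sig I K -> Y sig I K.

Definition learn_le_fin (X Y : criterion) : Prop :=
  forall sig (I : finType) (K : I -> structure sig), family K -> X sig I K -> Y sig I K.

Definition learn_lt (X Y : criterion) : Prop := learn_le X Y /\ ~ learn_le Y X.
Definition learn_equiv_fin (X Y : criterion) : Prop := learn_le_fin X Y /\ learn_le_fin Y X.

(* Main.v *)
Require Import Defs.
From mathcomp Require Import all_boot.
From Stdlib Require Import Classical FunctionalExtensionality.
Set Implicit Arguments.

Lemma iso_sym sig (S1 S2 : structure sig) : iso S1 S2 -> iso S2 S1.
Proof.
case=> f [[g fK gK] H]; exists g; split; first by exists f.
move=> i t; rewrite H; congr (S2 i _); apply: val_inj => /=.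
by rewrite -map_comp (eq_map gK) map_id.
Qed.


Lemma iso_trans sig (S1 S2 S3 : structure sig) : iso S1 S2 -> iso S2 S3 -> iso S1 S3.
Proof.
case=> f [bf H1] [g [bg H2]]; exists (g \o f); split; first exact: bij_comp.
move=> i t; rewrite H1 H2; congr (S3 i _); apply: val_inj => /=.
by rewrite map_comp.
Qed.


Lemma fam_uniq sig (I : countType) (K : I -> structure sig) (S : structure sig) (i j : I) :
  Defs.family K -> iso (K i) S -> iso (K j) S -> i = j.
Proof. by move=> F Hi Hj; apply: F; apply: iso_trans Hi (iso_sym Hj). Qed.
Arguments fam_uniq [sig I K S i j].

Lemma Ex_le_PL : learn_le Ex_learnable PL_learnable.
Proof.
move=> sig I K F [M HM]; exists M => S HS i; have [i0 [Hi0 [n0 Hn0]]] := HM S HS.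
split.
- move=> /(_ n0) [n [Hn HMn]]; rewrite Hn0 // in HMn; case: HMn => <-; exact: Hi0.
- move=> Hi; rewrite (fam_uniq F Hi Hi0) => m; exists (maxn m n0); split.
    exact: leq_maxl.
  by apply: Hn0; exact: leq_maxr.
Qed.


Definition subf sig n (s : fstructure sig n) m : fstructure sig m :=
  fun i t => s i (map_tuple (fun x : 'I_m.+1 => (inord x : 'I_n.+1)) t).
Arguments subf [sig n] s m.

Lemma subf_restr sig (S : structure sig) n m : m <= n ->
  existT _ m (subf (@restr _ S n) m) = stage S m.
Proof.
move=> mn; rewrite /stage; congr existT.
apply: functional_extensionality_dep => i; apply: functional_extensionality => t.
rewrite /subf /restr; congr (S i _); apply: val_inj => /=.
rewrite -map_comp; apply/eq_in_map => x _ /=; rewrite inordK //.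
exact: leq_trans (ltn_ord x) _.
Qed.


Fixpoint lastS (I : Type) (h : nat -> option I) k : option I :=
  match k with
  | 0 => h 0
  | k'.+1 => if h k'.+1 is Some j then Some j else lastS h k'
  end.

Lemma lastS_ext (I : Type) (h h' : nat -> option I) k :
  (forall m, m <= k -> h m = h' m) -> lastS h k = lastS h' k.
Proof.
elim: k => [|k IH] E /=; first exact: E.
rewrite E // IH // => m mk; apply: E; exact: leq_trans mk _.
Qed.


Lemma lastS_hit (I : Type) (h : nat -> option I) k j : h k = Some j -> lastS h k = Some j.
Proof. by case: k => [|k] /= ->. Qed.

Lemma PL_le_Ex : learn_le_fin PL_learnable Ex_learnable.
Proof.
move=> sig I K F [M HM].
exists (fun s => lastS (fun m => M (existT _ m (subf (projT2 s) m))) (projT1 s)).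
move=> S HS; case: (HS) => i0 Hi0; exists i0; split=> //.
have HN : forall l : seq I, exists N, forall j, j \in l -> j != i0 ->
    forall n, N <= n -> M (stage S n) != Some j.
  elim=> [|j l [N HN]]; first by exists 0.
  case: (eqVneq j i0) => [->|ji0].
    exists N => j'; rewrite inE => /orP[/eqP->|]; first by rewrite eqxx.
    exact: HN.
  have : ~ (forall m, exists n, m <= n /\ M (stage S n) = Some j).
    by move/(HM S HS j) => Hj; move: ji0; rewrite (fam_uniq F Hj Hi0) eqxx.
  move/not_all_ex_not => [m Hm].
  exists (maxn m N) => j'; rewrite inE => /orP[/eqP->|jl] ji n Hn.
    apply/eqP => E; apply: Hm; exists n; split=> //.
    exact: leq_trans (leq_maxl _ _) Hn.
  apply: HN => //; exact: leq_trans (leq_maxr _ _) Hn.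
have [N HN'] := HN (enum I).
have [n1 [Hn1 Mn1]] := proj2 (HM S HS i0) Hi0 N.
exists n1 => n Hn /=.
rewrite (@lastS_ext _ _ (fun m => M (stage S m))); last first.
  by move=> m mn; rewrite subf_restr.
rewrite -(subnKC Hn); elim: (n - n1) => [|d IH]; first by rewrite addn0; apply: lastS_hit.
rewrite addnS /=; case E: (M (stage S (n1 + d).+1)) => [j|//].
case: (eqVneq j i0) => [->//|ji].
have : M (stage S (n1 + d).+1) != Some j.
  apply: HN' => //; first exact: mem_enum.
  by rewrite -addnS; exact: leq_trans Hn1 (leq_addr _ _).
by rewrite E eqxx.
Qed.


Definition sig1 : signature := [:: 1].
Definition o0 : 'I_(size sig1) := ord0.
Definition St (p : nat -> bool) : structure sig1 := fun i t => p (nth 0 t 0).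
Definition kp (o : option nat) (x : nat) : bool :=
  if o is Some k then x < k else odd x.
Definition K (o : option nat) : structure sig1 := St (kp o).
Definition PS (S : structure sig1) (x : nat) : bool := S o0 [tuple x].

Lemma map_tuple1 (f : nat -> nat) x : map_tuple f [tuple x] = [tuple f x].
Proof. by apply: val_inj. Qed.

Lemma iso_PS (S : structure sig1) o : iso (K o) S ->
  exists f, bijective f /\ forall x, kp o x = PS S (f x).
Proof.
case=> f [bf H]; exists f; split=> // x.
by have := H o0 [tuple x]; rewrite map_tuple1.
Qed.

Lemma iso_pat (p p' : nat -> bool) f : bijective f -> (forall x, p x = p' (f x)) ->
  iso (St p) (St p').
Proof.
move=> bf H; exists f; split=> // i t; rewrite /St H /=.
have i0 : nat_of_ord i = 0 by apply/eqP; rewrite -leqn0 -ltnS; exact: ltn_ord i.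
have st : 0 < size t by rewrite size_tuple i0.
by rewrite (nth_map 0).
Qed.

Lemma inj_bound (h : nat -> nat) a b : injective h -> (forall x, x < a -> h x < b) -> a <= b.
Proof.
move=> hi hb.
pose h' (x : 'I_a) : 'I_b := Ordinal (hb x (ltn_ord x)).
have : injective h' by move=> x y [] /hi /val_inj.
by move/leq_card; rewrite !card_ord.
Qed.

Lemma inj_unb (h : nat -> nat) : injective h -> forall m, exists j, m <= h j.
Proof.
move=> hi m; case: (boolP (has (fun j => m <= h j) (iota 0 m.+1))).
  by case/hasP=> j _ ?; exists j.
move/hasPn => H; suff : m.+1 <= m by rewrite ltnn.
apply: (@inj_bound h m.+1 m hi) => x xm.
by have := H x; rewrite mem_iota /= add0n xm ltnNge => /(_ isT).
Qed.

Definition cnt (q : nat -> bool) x := count q (iota 0 x).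

Lemma cntS (q : nat -> bool) x : cnt q x.+1 = cnt q x + q x.
Proof. by rewrite /cnt -addn1 iotaD count_cat /= add0n addn0. Qed.

Lemma cnt_mono (q : nat -> bool) x y : x <= y -> cnt q x <= cnt q y.
Proof.
move=> xy; rewrite -(subnKC xy); elim: (y - x) => [|d IH]; first by rewrite addn0.
by rewrite addnS cntS; exact: leq_trans IH (leq_addr _ _).
Qed.

Lemma cnt_lt (q : nat -> bool) x y : q x -> x < y -> cnt q x < cnt q y.
Proof. move=> qx xy; have := @cnt_mono q _ _ xy; rewrite cntS qx addn1; exact. Qed.

Lemma cnt_inj (q : nat -> bool) x y : q x -> q y -> cnt q x = cnt q y -> x = y.
Proof.
move=> qx qy E; case: (ltngtP x y) => // H.
  by have := @cnt_lt q _ _ qx H; rewrite E ltnn.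
by have := @cnt_lt q _ _ qy H; rewrite E ltnn.
Qed.

Lemma cnt_hit (q : nat -> bool) j m : j < cnt q m -> exists x, q x /\ cnt q x = j.
Proof.
elim: m => [|m IH] //; rewrite cntS.
case: (ltnP j (cnt q m)) => [/IH //|jm]; case qm: (q m); last by rewrite addn0 ltnNge jm.
by rewrite addn1 ltnS => mj; exists m; split=> //; apply/eqP; rewrite eqn_leq mj jm.
Qed.

Lemma cnt_unb (q : nat -> bool) : (forall m, exists x, m <= x /\ q x) -> forall j, exists m, j < cnt q m.
Proof.
move=> Hq; elim=> [|j [m Hm]].
  by have [x [_ qx]] := Hq 0; exists x.+1; rewrite cntS qx addn1.
have [x [mx qx]] := Hq m; exists x.+1; rewrite cntS qx addn1 ltnS.
exact: leq_trans Hm (@cnt_mono q _ _ mx).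
Qed.

Lemma bij_nat (f : nat -> nat) : injective f -> (forall y, exists x, f x == y) -> bijective f.
Proof.
move=> fi fs; exists (fun y => ex_minn (fs y)).
  move=> x; case: ex_minnP => z /eqP E _; exact: fi.
by move=> y; case: ex_minnP => z /eqP.
Qed.

Lemma iso_fin (p : nat -> bool) N c : (forall x, N <= x -> ~~ p x) -> cnt p N = c ->
  iso (K (Some c)) (St p).
Proof.
move=> Hp Hc; apply: iso_sym.
pose f x := if p x then cnt p x else c + cnt (predC p) x.
have Hinf : forall m, exists x, m <= x /\ predC p x.
  by move=> m; exists (maxn m N); split; [exact: leq_maxl | apply: Hp; exact: leq_maxr].
have pf : forall x, p x -> cnt p x < c.
  move=> x px; rewrite -Hc; apply: cnt_lt => //; rewrite ltnNge; apply/negP => /Hp.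
  by rewrite px.
apply: (@iso_pat _ _ f).
- apply: bij_nat.
    move=> x y; rewrite /f; case px: (p x); case py: (p y).
    + by apply: cnt_inj.
    + by move=> E; have := pf x px; rewrite E ltnNge leq_addr.
    + by move=> E; have := pf y py; rewrite -E ltnNge leq_addr.
    + move/eqP; rewrite eqn_add2l => /eqP; apply: cnt_inj => /=; by rewrite ?px ?py.
  move=> y; case: (ltnP y c) => yc.
    have yc' : y < cnt p N by rewrite Hc.
    have [x [px E]] := @cnt_hit p _ _ yc'.
    by exists x; rewrite /f px E.
  have [m Hm] := @cnt_unb _ Hinf (y - c).
  have [x [px E]] := @cnt_hit _ _ _ Hm; exists x; rewrite /f.
  move: px; rewrite /= => /negbTE ->; by rewrite E subnKC.
- move=> x; rewrite /f /=; case px: (p x); first by rewrite pf.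
  by rewrite ltnNge leq_addr.
Qed.

Lemma iso_inf (p : nat -> bool) : (forall m, exists x, m <= x /\ p x) ->
  (forall m, exists x, m <= x /\ ~~ p x) -> iso (K None) (St p).
Proof.
move=> Ht Hf; apply: iso_sym.
pose f x := if p x then (cnt p x).*2.+1 else (cnt (predC p) x).*2.
apply: (@iso_pat _ _ f).
- apply: bij_nat.
    move=> x y; rewrite /f; case px: (p x); case py: (p y).
    + by move=> [] /double_inj; apply: cnt_inj.
    + by move=> E; have := congr1 odd E; rewrite /= !odd_double.
    + by move=> E; have := congr1 odd E; rewrite /= !odd_double.
    + move/double_inj; apply: cnt_inj => /=; by rewrite ?px ?py.
  move=> y; case oy: (odd y).
    have [m Hm] := @cnt_unb _ Ht y./2; have [x [px E]] := @cnt_hit _ _ _ Hm.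
    exists x; rewrite /f px E; apply/eqP.
    by rewrite -[X in _ = X](odd_double_half y) oy add1n.
  have [m Hm] := @cnt_unb _ Hf y./2; have [x [px E]] := @cnt_hit _ _ _ Hm.
  exists x; rewrite /f; move: px; rewrite /= => /negbTE ->; rewrite E; apply/eqP.
  by rewrite -[X in _ = X](odd_double_half y) oy add0n.
- move=> x; rewrite /f /=; case: (p x); by rewrite /= ?odd_double.
Qed.


Lemma le_SS k l : iso (K (Some k)) (K (Some l)) -> k <= l.
Proof.
move/iso_PS => [f [bf Hf]]; apply: (@inj_bound f k l (bij_inj bf)) => x xk.
by have := Hf x; rewrite /= xk.
Qed.

Lemma no_NS l : ~ iso (K None) (K (Some l)).
Proof.
move/iso_PS => [f [bf Hf]].
have : l.+1 <= l.
  apply: (@inj_bound (fun j => f j.*2.+1) l.+1 l).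
    by move=> x y /(bij_inj bf) [] /double_inj.
  by move=> x _; have := Hf x.*2.+1; rewrite /= odd_double.
by rewrite ltnn.
Qed.

Lemma famK : Defs.family K.
Proof.
move=> [k|] [l|] H //.
- by congr Some; apply/eqP; rewrite eqn_leq le_SS //= le_SS //; apply: iso_sym.
- by case: (no_NS (iso_sym H)).
- by case: (no_NS H).
Qed.

Definition Pf n (s : fstructure sig1 n) (m : nat) : bool := s o0 [tuple inord m].

Definition ML : learner sig1 (option nat) := fun s =>
  if Pf (projT2 s) (projT1 s) then Some None
  else Some (Some (count (Pf (projT2 s)) (iota 0 (projT1 s).+1))).

Lemma Pf_restr (S : structure sig1) n m : m <= n -> Pf (@restr _ S n) m = PS S m.
Proof.
move=> mn; rewrite /Pf /restr /PS; congr (S o0 _); apply: val_inj => /=.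
by rewrite inordK.
Qed.

Lemma ML_stage S n : ML (stage S n) =
  if PS S n then Some None else Some (Some (cnt (PS S) n.+1)).
Proof.
have E : count (Pf (@restr _ S n)) (iota 0 n.+1) = cnt (PS S) n.+1.
  rewrite /cnt; apply: eq_in_count => m; rewrite mem_iota => /andP[_ mn].
  exact: Pf_restr.
by rewrite /ML /stage; cbn [projT1 projT2]; rewrite Pf_restr // E.
Qed.

Lemma bound (h : nat -> nat) k : exists B, forall x, x < k -> h x < B.
Proof.
elim: k => [|k [B HB]]; first by exists 0.
exists (maxn B (h k).+1) => x; rewrite ltnS leq_eqVlt => /orP[/eqP->|xk].
  exact: leq_trans (leq_maxr _ _).
exact: leq_trans (HB x xk) (leq_maxl _ _).
Qed.

Lemma cnt_const (q : nat -> bool) N n : (forall x, N <= x -> ~~ q x) -> N <= n ->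
  cnt q n = cnt q N.
Proof.
move=> Hq Nn; rewrite -(subnKC Nn); elim: (n - N) => [|d IH]; first by rewrite addn0.
by rewrite addnS cntS IH (negbTE (Hq _ (leq_addr _ _))) addn0.
Qed.

Lemma PL_K : PL_learnable K.
Proof.
exists ML => S HS i; have [i0 Hi0] := HS.
suff E : (forall m, exists n, m <= n /\ ML (stage S n) = Some i) <-> i = i0.
  rewrite E; split=> [->//|Hi]; exact: (fam_uniq famK Hi Hi0).
have [f [bf Hf]] := iso_PS Hi0.
case: i0 Hi0 Hf => [k|] Hi0 Hf.
- have [B HB] := bound f k.
  have HnB : forall y, B <= y -> ~~ PS S y.
    move=> y By; case: bf => g fg gf; rewrite -(gf y) -Hf /=; apply/negP => gk.
    by have := HB _ gk; rewrite gf ltnNge By.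
  have Hk : cnt (PS S) B = k.
    have H1 : iso (K (Some (cnt (PS S) B))) (St (PS S)) by apply: iso_fin HnB _.
    have H2 : iso (K (Some k)) (St (PS S)) by apply: (@iso_pat _ _ f).
    by case: (fam_uniq famK H1 H2).
  have Hout : forall n, B <= n -> ML (stage S n) = Some (Some k).
    move=> n Bn; rewrite ML_stage (negbTE (HnB _ Bn)) (@cnt_const _ B) //.
      by rewrite Hk.
    exact: leq_trans Bn _.
  split=> [/(_ B) [n [Bn]]|->].
    rewrite Hout // => -[] ->; done.
  move=> m; exists (maxn m B); split; first exact: leq_maxl.
  by rewrite Hout // leq_maxr.
- have Ht : forall m, exists y, m <= y /\ PS S y.
    have hi : injective (fun j => f j.*2.+1).
      by move=> x y /(bij_inj bf) [] /double_inj.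
    move=> m; have [j Hj] := @inj_unb _ hi m.
    by exists (f j.*2.+1); rewrite -Hf /= odd_double.
  case: i => [j|]; last first.
    split=> // _ m; have [y [my Py]] := Ht m; exists y; split=> //.
    by rewrite ML_stage Py.
  split=> // /(_ _) H; have [m Hm] := @cnt_unb _ Ht j.
  have [n [mn]] := H m; rewrite ML_stage; case: (PS S n) => //= -[] E.
  have := @cnt_mono (PS S) _ _ (leq_trans mn (leqnSn n)); rewrite E => /(leq_trans Hm).
  by rewrite ltnn.
Qed.


Definition pat (w : seq bool) (x : nat) : bool := nth false w x.

Definition ExL (M : learner sig1 (option nat)) := forall S, LD K S ->
  exists i, iso (K i) S /\ exists n0, forall n, n0 <= n -> M (stage S n) = Some i.

Lemma stage_agree (p p' : nat -> bool) n : (forall x, x <= n -> p x = p' x) ->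
  stage (St p) n = stage (St p') n.
Proof.
move=> H; rewrite /stage; congr existT.
apply: functional_extensionality_dep => i; apply: functional_extensionality => t.
rewrite /restr /St; apply: H.
case: t => [[|a s] _] //=.
by rewrite -ltnS ltn_ord.
Qed.

Lemma LD_pat w : iso (K (Some (cnt (pat w) (size w)))) (St (pat w)).
Proof. by apply: (@iso_fin _ (size w)) => // x wx; rewrite /pat nth_default. Qed.

Definition extP (M : learner sig1 (option nat)) (w : seq bool) : pred nat :=
  fun n => (size w <= n) && (M (stage (St (pat w)) n) != Some None).

Lemma ext_ex M (HM : ExL M) w : exists n, extP M w n.
Proof.
have [i [Hi [n0 Hn0]]] := HM _ (ex_intro (fun i => iso (K i) _) _ (LD_pat w)).
case: i Hi Hn0 => [c|] Hi Hn0.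
  exists (maxn n0 (size w)); rewrite /extP leq_maxr Hn0 ?leq_maxl //.
by have := fam_uniq famK Hi (LD_pat w).
Qed.

Definition next M (HM : ExL M) w := ex_minn (ext_ex HM w).

Lemma next_spec M (HM : ExL M) w :
  size w <= next HM w /\ M (stage (St (pat w)) (next HM w)) != Some None.
Proof. by rewrite /next; case: ex_minnP => n /andP[] *. Qed.

Fixpoint ws M (HM : ExL M) t : seq bool :=
  match t with
  | 0 => [::]
  | t'.+1 => let w := ws HM t' in w ++ nseq (next HM w - size w).+1 false ++ [:: true]
  end.

Lemma nth_ff k i s : i <= k -> nth false (false :: nseq k false ++ s) i = false.
Proof.
move=> ik; rewrite -cat_cons; change (false :: nseq k false) with (nseq k.+1 false).
by rewrite nth_cat size_nseq ltnS ik nth_nseq ltnS ik.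
Qed.

Lemma wsS M (HM : ExL M) t : ws HM t.+1 =
  ws HM t ++ nseq (next HM (ws HM t) - size (ws HM t)).+1 false ++ [:: true].
Proof. by []. Qed.

Lemma ws_sizeS M (HM : ExL M) t : size (ws HM t.+1) = (next HM (ws HM t)).+2.
Proof.
have := (next_spec HM (ws HM t)).1.
rewrite /=; rewrite !size_cat /= size_cat size_nseq /=.
move: (size _) (next _ _) => a b ab; rewrite addn1 !addnS subnKC //.
Qed.

Lemma ws_size M (HM : ExL M) t : t <= size (ws HM t).
Proof.
elim: t => [//|t IH]; rewrite ws_sizeS ltnS.
exact: leq_trans IH (leq_trans (next_spec HM _).1 (leqnSn _)).
Qed.

Lemma ws_prefix M (HM : ExL M) t d : exists s, ws HM (t + d) = ws HM t ++ s.
Proof.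
elim: d => [|d [s Hs]]; first by exists [::]; rewrite addn0 cats0.
by rewrite addnS /= Hs; eexists; rewrite -catA.
Qed.

Lemma nth_ws M (HM : ExL M) t t' x : x < size (ws HM t) -> x < size (ws HM t') ->
  nth false (ws HM t) x = nth false (ws HM t') x.
Proof.
wlog tt : t t' / t <= t'.
  move=> W; case: (leqP t t') => [|/ltnW] h h1 h2; first exact: W.
  by symmetry; apply: W.
move=> h1 _; rewrite -(subnKC tt); have [s ->] := ws_prefix HM t (t' - t).
by rewrite nth_cat h1.
Qed.

Definition pinf M (HM : ExL M) x := nth false (ws HM x.+1) x.

Lemma agree M (HM : ExL M) t x : x <= next HM (ws HM t) -> pinf HM x = pat (ws HM t) x.
Proof.
move=> xn; rewrite /pinf (@nth_ws _ HM x.+1 t.+1).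
- rewrite /= /pat nth_cat; case: ifP => // /negbT; rewrite -leqNgt => wx.
  by rewrite nth_ff ?nth_default // leq_sub2r.
- exact: ws_size.
- by rewrite ws_sizeS ltnS; exact: leq_trans xn _.
Qed.

Lemma pinf_true M (HM : ExL M) t : pinf HM (next HM (ws HM t)).+1.
Proof.
have sn := (next_spec HM (ws HM t)).1.
rewrite /pinf (@nth_ws _ HM _ t.+1).
- rewrite /= nth_cat ifF; last by rewrite ltnNge ltnW // ltnS.
  by rewrite subSn //= nth_cat size_nseq ltnn subnn.
- exact: ws_size.
- by rewrite ws_sizeS.
Qed.

Lemma pinf_false M (HM : ExL M) t : ~~ pinf HM (next HM (ws HM t)).
Proof.
by rewrite (@agree _ HM t) // /pat nth_default // (next_spec HM (ws HM t)).1.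
Qed.

Lemma not_Ex : ~ Ex_learnable K.
Proof.
case=> M HM0; have HM : ExL M by [].
have Ht : forall m, exists x, m <= x /\ pinf HM x.
  move=> m; exists (next HM (ws HM m)).+1; split; last exact: pinf_true.
  exact: leq_trans (ws_size HM m) (leq_trans (next_spec HM _).1 (leqnSn _)).
have Hf : forall m, exists x, m <= x /\ ~~ pinf HM x.
  move=> m; exists (next HM (ws HM m)); split; last exact: pinf_false.
  exact: leq_trans (ws_size HM m) (next_spec HM _).1.
have Hiso := @iso_inf _ Ht Hf.
have [i [Hi [n0 Hn0]]] := HM _ (ex_intro (fun i => iso (K i) _) _ Hiso).
have := fam_uniq famK Hi Hiso => Ei; subst i.
have := (next_spec HM (ws HM n0)).2.
rewrite -(@stage_agree (pinf HM)); last by move=> x; apply: agree.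
rewrite Hn0 ?eqxx //.
exact: leq_trans (ws_size HM n0) (next_spec HM _).1.
Qed.


Theorem mainTheorem16 :
  learn_equiv_fin Ex_learnable PL_learnable /\ learn_lt Ex_learnable PL_learnable.
Proof.
split; first split.
- move=> sig I K; exact: (@Ex_le_PL sig I K).
- exact: PL_le_Ex.
split; first exact: Ex_le_PL.
move=> H; apply: not_Ex; exact: (H sig1 _ K famK PL_K).
Qed.
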